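(* Let $L$ be a flat layout. There exists a tuple morphism $f$ with $L_f=L$ if and only if $L$ is tractable.
   Context: $\langle n\rangle_*=\{*,1,\dots,n\}$. A tuple morphism $f:(s_1,\dots,s_m)\to(t_1,\dots,t_n)$ between tuples of positive integers is given by a pointed map $\alpha:\langle m\rangle_*\to\langle n\rangle_*$ ($\alpha( * )=*$) such that each $j\in\{1,\dots,n\}$ has at most one preimage and $s_i=t_{\alpha(i)}$ whenever $\alpha(i)\ne*$. Its encoded flat layout is $L_f=(s_1,\dots,s_m):(d_1,\dots,d_m)$ with $d_i=0$ if $\alpha(i)=*$ and $d_i=\prod_{j<\alpha(i)}t_j$ otherwise. A flat layout is a pair $(s_1,\dots,s_m):(d_1,\dots,d_m)$ of a tuple of positive integers and a tuple of nonnegative integers of the same length, with modes $s_i:d_i$. Order modes by $s:d\preceq s':d'$ iff $d<d'$ or ($d=d'$ and $s\le s'$); $\mathrm{sort}(L)$ is the stable reordering of the modes into $\preceq$-nondecreasing order. $L$ is tractable if, writing $\mathrm{sort}(L)=(s'_1,\dots,s'_m):(d'_1,\dots,d'_m)$, for each $1\le i<m$ either $d'_i=0$ or $s'_id'_i$ divides $d'_{i+1}$. *)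

(* Defs.v *)
From mathcomp Require Import all_boot.
Set Implicit Arguments. Unset Strict Implicit. Unset Printing Implicit Defensive.

(* Tuple morphism f : (s_1..s_m) -> (t_1..t_n) given by a pointed map
   <m>_* -> <n>_*, encoded as alpha : 'I_m -> option 'I_n (None = * ).
   Indices are 0-based: position i of the paper is i-1 here. *)
Record tuple_morphism := TupleMorphism {
  tm_src : seq nat;
  tm_tgt : seq nat;
  tm_map : 'I_(size tm_src) -> option 'I_(size tm_tgt);
  tm_src_pos : all (fun x => 0 < x) tm_src;
  tm_tgt_pos : all (fun x => 0 < x) tm_tgt;
  tm_inj : forall i i' j, tm_map i = Some j -> tm_map i' = Some j -> i = i';
  tm_compat : forall i j, tm_map i = Some j -> nth 0 tm_src i = nth 0 tm_tgt j
}.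

Definition tm_strides (f : tuple_morphism) : seq nat :=
  [seq match @tm_map f i with
       | None => 0
       | Some k => \prod_(j < k) nth 0 (tm_tgt f) j
       end | i <- enum 'I_(size (tm_src f))].

Record flat_layout := FlatLayout {
  fl_shape : seq nat;
  fl_stride : seq nat;
  fl_size : size fl_shape = size fl_stride;
  fl_pos : all (fun x => 0 < x) fl_shape
}.

Definition encodes (f : tuple_morphism) (L : flat_layout) : Prop :=
  tm_src f = fl_shape L /\ tm_strides f = fl_stride L.

Definition modes (L : flat_layout) : seq (nat * nat) := zip (fl_shape L) (fl_stride L).

Definition mode_le (a b : nat * nat) : bool :=
  (a.2 < b.2) || ((a.2 == b.2) && (a.1 <= b.1)).

(* Stable sort (mathcomp's path.sort is a stable merge sort). *)
Definition sort_layout (L : flat_layout) : seq (nat * nat) := sort mode_le (modes L).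

Definition tractable (L : flat_layout) : Prop :=
  let M := sort_layout L in
  forall i, i.+1 < size M ->
    (nth (0,0) M i).2 = 0 \/
    (nth (0,0) M i).1 * (nth (0,0) M i).2 %| (nth (0,0) M i.+1).2.

(* Main.v *)
Require Import Defs.
From mathcomp Require Import all_boot zify.

Section Common.
Variable L : flat_layout.
Local Notation sh := (fl_shape L).
Local Notation st := (fl_stride L).
Local Notation n := (size sh).

Lemma size_modes : size (modes L) = n.
Proof. by rewrite /modes size_zip -fl_size minnn. Qed.

Definition Sx := sort (relpre snd mode_le) (zip (iota 0 n) (modes L)).

Lemma map_snd_S : map snd Sx = sort_layout L.
Proof.
rewrite /sort_layout -sort_map /Sx.
have -> : [seq x.2 | x <- zip (iota 0 n) (modes L)] = modes L.
  by apply: (unzip2_zip (s:=iota 0 n)); rewrite size_iota size_modes.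
by [].
Qed.

Lemma size_S : size Sx = n.
Proof. by rewrite /Sx size_sort size_zip size_iota size_modes minnn. Qed.

Lemma size_M : size (sort_layout L) = n.
Proof. by rewrite -map_snd_S size_map size_S. Qed.

Lemma mem_S x : x \in Sx -> x.1 < n /\ x.2 = (nth 0 sh x.1, nth 0 st x.1).
Proof.
rewrite /Sx (perm_mem (permEl (perm_sort _ _))) => /(nthP (0,(0,0))) [k].
rewrite size_zip size_iota size_modes minnn => Hk; rewrite nth_zip ?size_iota ?size_modes // nth_iota // add0n => <- /=.
split=> //.
by rewrite /modes nth_zip ?fl_size.
Qed.

Definition idx := map fst Sx.

Lemma perm_idx : perm_eq idx (iota 0 n).
Proof.
rewrite /idx.
have -> : iota 0 n = map fst (zip (iota 0 n) (modes L)).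
  by rewrite -/(unzip1 _) unzip1_zip // size_iota size_modes.
by apply: perm_map; exact: (permEl (perm_sort _ _)).
Qed.

Lemma uniq_idx : uniq idx.
Proof. by rewrite (perm_uniq perm_idx) iota_uniq. Qed.

Lemma size_idx : size idx = n.
Proof. by rewrite size_map size_S. Qed.

Definition pos i := index i idx.

Lemma in_idx i : i < n -> i \in idx.
Proof. by move=> Hi; rewrite (perm_mem perm_idx) mem_iota. Qed.

Lemma pos_lt i : i < n -> pos i < n.
Proof. by move=> Hi; rewrite -size_idx index_mem in_idx. Qed.

Lemma nth_pos i : i < n -> nth 0 idx (pos i) = i.
Proof. by move=> Hi; rewrite nth_index // in_idx. Qed.

Lemma pos_nth p : p < n -> pos (nth 0 idx p) = p.
Proof. by move=> Hp; rewrite /pos index_uniq // ?size_idx // uniq_idx. Qed.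

Lemma idx_lt p : p < n -> nth 0 idx p < n.
Proof.
move=> Hp; have : nth 0 idx p \in idx by rewrite mem_nth // size_idx.
by rewrite (perm_mem perm_idx) mem_iota.
Qed.

Lemma nth_M p : p < n ->
  nth (0,0) (sort_layout L) p = (nth 0 sh (nth 0 idx p), nth 0 st (nth 0 idx p)).
Proof.
move=> Hp; rewrite -map_snd_S (nth_map (0,(0,0))) ?size_S //.
have /mem_S [_ ->] : nth (0,(0,0)) Sx p \in Sx by rewrite mem_nth // size_S.
by rewrite /idx (nth_map (0,(0,0))) ?size_S.
Qed.

Lemma nth_M_pos i : i < n ->
  nth (0,0) (sort_layout L) (pos i) = (nth 0 sh i, nth 0 st i).
Proof. by move=> Hi; rewrite nth_M ?pos_lt // nth_pos. Qed.

Lemma mode_le_total : total mode_le.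
Proof.
move=> [a b] [c d]; rewrite /mode_le /=.
case: (ltngtP b d) => //= _; exact: leq_total.
Qed.

Lemma sorted_M : sorted mode_le (sort_layout L).
Proof. exact: sort_sorted mode_le_total _. Qed.

Lemma M_step p : p.+1 < n ->
  mode_le (nth (0,0) (sort_layout L) p) (nth (0,0) (sort_layout L) p.+1).
Proof. by move=> Hp; move/(sortedP (0,0)): sorted_M; apply; rewrite size_M. Qed.

Lemma sh_pos i : i < n -> 0 < nth 0 sh i.
Proof. by move=> Hi; move/allP: (fl_pos L); apply; rewrite mem_nth. Qed.

End Common.

Definition ppn (t : seq nat) k := \prod_(0 <= j < k) nth 0 t j.

Lemma prod_pos (t : seq nat) a b : all (fun x => 0 < x) t -> b <= size t ->
  0 < \prod_(a <= j < b) nth 0 t j.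
Proof.
move=> Ht Hb; rewrite big_seq_cond; elim/big_rec: _ => // j x /andP[].
rewrite mem_index_iota => /andP[_ Hj] _ Hx; rewrite muln_gt0 Hx andbT.
by move/allP: Ht; apply; rewrite mem_nth //; apply: leq_trans Hj Hb.
Qed.

Lemma key (t : seq nat) k k2 : all (fun x => 0 < x) t -> k < size t -> k2 < size t ->
  k != k2 -> mode_le (nth 0 t k, ppn t k) (nth 0 t k2, ppn t k2) ->
  nth 0 t k * ppn t k %| ppn t k2.
Proof.
move=> Ht Hk Hk2 Hne; rewrite /mode_le /= /ppn.
case: (ltngtP k k2) Hne => // Hlt _.
- move=> _; rewrite [X in _ %| X](big_cat_nat _ (n:=k.+1)) //= big_nat_recr //= mulnC.
  exact: dvdn_mulr.
- move=> H; rewrite [X in _ * X %| _](big_cat_nat _ (n:=k2.+1) (p:=k)) //= big_nat_recr //=.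
  move: H; rewrite [X in X < _](big_cat_nat _ (n:=k2.+1) (p:=k)) //= big_nat_recr //=.
  rewrite [X in X == _](big_cat_nat _ (n:=k2.+1) (p:=k)) //= big_nat_recr //=.
  have HA := prod_pos t 0 k2 Ht (ltnW Hk2).
  have HC := prod_pos t k2.+1 k Ht (ltnW Hk).
  have HB : 0 < nth 0 t k2 by move/allP: Ht; apply; rewrite mem_nth.
  have HT : 0 < nth 0 t k by move/allP: Ht; apply; rewrite mem_nth.
  move: HA HB HC HT.
  set A := \prod_(0 <= i < k2) _; set B := nth 0 t k2; set C := \prod_(_ <= i < k) _.
  set T := nth 0 t k => HA HB HC HT.
  move=> H.
  have HBC : B * C = 1.
    have : A * B * C <= A by move: H => /orP[/ltnW //|/andP[/eqP -> _]].
    rewrite -mulnA -{2}(muln1 A) leq_pmul2l //. nia.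
  have HB1 : B = 1 by nia.
  have HC1 : C = 1 by nia.
  move: H; rewrite HB1 HC1 !muln1 ltnn eqxx /= => HT1.
  have -> : T = 1 by lia.
  by rewrite mul1n.
Qed.

Lemma nth_strides f (i : 'I_(size (tm_src f))) :
  nth 0 (tm_strides f) i =
  match @tm_map f i with None => 0 | Some k => ppn (tm_tgt f) k end.
Proof.
rewrite /tm_strides (nth_map i) ?size_enum_ord // nth_ord_enum.
by case: (@tm_map f i) => // k; rewrite /ppn big_mkord.
Qed.

Lemma fwd L f : encodes f L -> tractable L.
Proof.
case=> Hsrc Hstr; rewrite /tractable size_M => p Hp.
have Hp0 : p < size (fl_shape L) by apply: ltnW.
have Hi := idx_lt L _ Hp0; have Hi2 := idx_lt L _ Hp.
set i := nth 0 (idx L) p in Hi *; set i2 := nth 0 (idx L) p.+1 in Hi2 *.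
have Hne : i != i2.
  by rewrite /i /i2 nth_uniq ?size_idx ?uniq_idx // (ltn_eqF (ltnSn p)).
have Hle := M_step L _ Hp; rewrite !(nth_M L) // -/i -/i2 in Hle *.
rewrite /=.
case: (eqVneq (nth 0 (fl_stride L) i) 0) => [->|Hd]; [by left|right].
have Hi' : i < size (tm_src f) by rewrite Hsrc.
have Hi2' : i2 < size (tm_src f) by rewrite Hsrc.
have E1 := nth_strides f (Ordinal Hi'); rewrite /= Hstr in E1.
have E2 := nth_strides f (Ordinal Hi2'); rewrite /= Hstr in E2.
have Hd2 : nth 0 (fl_stride L) i2 != 0.
  move: Hle Hd; rewrite /mode_le /=; case: (nth 0 (fl_stride L) i2) => //.
  by rewrite ltn0 /= => /andP[/eqP ->].
case Ek: (@tm_map f (Ordinal Hi')) E1 => [k|] E1; last by rewrite E1 eqxx in Hd.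
case Ek2: (@tm_map f (Ordinal Hi2')) E2 => [k2|] E2; last by rewrite E2 eqxx in Hd2.
have C1 := tm_compat Ek; have C2 := tm_compat Ek2.
rewrite /= Hsrc in C1 C2.
have Hkk : (k : nat) != k2.
  apply/negP => /eqP /val_inj Ekk; subst k2.
  have := tm_inj Ek Ek2 => /(congr1 val) /= Eii.
  by rewrite Eii eqxx in Hne.
rewrite E1 E2 C1.
apply: key => //; first exact: tm_tgt_pos.
by rewrite -C1 -C2 -E1 -E2.
Qed.

Section Bwd.
Variable L : flat_layout.
Hypothesis Htr : tractable L.
Local Notation sh := (fl_shape L).
Local Notation st := (fl_stride L).
Local Notation n := (size sh).
Local Notation M := (sort_layout L).

Definition ds p := (nth (0,0) M p).2.
Definition ss p := (nth (0,0) M p).1.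
Definition Qf p := if p is q.+1 then (if ds q == 0 then 1 else ss q * ds q) else 1.
Definition Tf j := let p := j./2 in
  if ds p == 0 then 1 else if odd j then ss p else ds p %/ Qf p.
Definition T := mkseq Tf n.*2.

Lemma ds_pos i : i < n -> ds (pos L i) = nth 0 st i.
Proof. by move=> Hi; rewrite /ds nth_M_pos. Qed.
Lemma ss_pos i : i < n -> ss (pos L i) = nth 0 sh i.
Proof. by move=> Hi; rewrite /ss nth_M_pos. Qed.

Lemma ss_gt0 p : p < n -> 0 < ss p.
Proof.
move=> Hp; rewrite /ss nth_M //=; apply: sh_pos; exact: idx_lt.
Qed.

Lemma ds_mono p : p.+1 < n -> ds p <= ds p.+1.
Proof.
move=> Hp; have := M_step L _ Hp; rewrite /mode_le /ds.
by case/orP=> [/ltnW //|/andP[/eqP -> _]].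
Qed.

Lemma Q_dvd p : p < n -> Qf p %| ds p.
Proof.
case: p => [|q] Hq //=.
case: eqP => // /eqP Hd.
have := Htr q; rewrite size_M => /(_ Hq) [/eqP|//].
by rewrite (negbTE Hd).
Qed.

Lemma Q_1 p : p < n -> ds p = 0 -> Qf p = 1.
Proof.
case: p => [|q] Hq //= Hd.
have := ds_mono _ Hq; rewrite Hd leqn0 => ->; done.
Qed.

Lemma Q_gt0 p : p < n -> 0 < Qf p.
Proof.
case: p => [|q] //= Hq; case: eqP => //= /eqP Hd.
by rewrite muln_gt0 ss_gt0 ?(ltnW Hq) //= lt0n.
Qed.

Lemma prefix p : p <= n -> \prod_(0 <= j < p.*2) Tf j = Qf p.
Proof.
elim: p => [|p IH] Hp; first by rewrite big_geq.
rewrite doubleS !big_nat_recr //= IH ?(ltnW Hp) //.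
rewrite /Tf -[(p.*2.+1)./2]/(uphalf p.*2) uphalf_double doubleK odd_double /=.
case: eqP => Hd.
  by rewrite Q_1 // Hd.
by rewrite odd_double /= [Qf p * _]mulnC divnK ?Q_dvd // mulnC.
Qed.

Lemma T_pos : all (fun x => 0 < x) T.
Proof.
apply/allP => x /(nthP 0) [j]; rewrite size_mkseq => Hj <-.
rewrite nth_mkseq // /Tf.
have Hp : j./2 < n by rewrite ltn_half_double.
case: eqP => Hd //.
case: odd; first exact: ss_gt0.
rewrite divn_gt0; last exact: Q_gt0.
apply: dvdn_leq; [lia | exact: Q_dvd].
Qed.

Definition alpha (i : 'I_n) : option 'I_(size T) :=
  if nth 0 st i == 0 then None else insub (pos L i).*2.+1.

Lemma alpha_some i j : alpha i = Some j -> nth 0 st i != 0 /\ val j = (pos L i).*2.+1.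
Proof.
rewrite /alpha; case: eqP => // /eqP Hd.
by case: insubP => // u _ Hu [<-].
Qed.

Lemma alpha_none i : alpha i = None -> nth 0 st i = 0.
Proof.
rewrite /alpha; case: eqP => // /eqP Hd.
case: insubP => // /negP []; rewrite size_mkseq.
have := pos_lt L _ (ltn_ord i); lia.
Qed.

Lemma alpha_inj i i' j : alpha i = Some j -> alpha i' = Some j -> i = i'.
Proof.
move=> /alpha_some [_ E1] /alpha_some [_ E2].
have Ep : pos L i = pos L i' by lia.
apply: val_inj => /=.
by rewrite -(nth_pos L _ (ltn_ord i)) -(nth_pos L _ (ltn_ord i')) Ep.
Qed.

Lemma alpha_compat i j : alpha i = Some j -> nth 0 sh i = nth 0 T j.
Proof.
move=> /alpha_some [Hd Ej]; rewrite Ej nth_mkseq; last first.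
  have := pos_lt L _ (ltn_ord i); lia.
rewrite /Tf -[((pos L i).*2.+1)./2]/(uphalf (pos L i).*2) uphalf_double /=.
by rewrite odd_double /= ds_pos // ss_pos // (negbTE Hd).
Qed.

Lemma alpha_stride i j : alpha i = Some j -> ppn T j = nth 0 st i.
Proof.
move=> Hj; have [Hd Ej] := alpha_some _ _ Hj; rewrite /ppn Ej.
have Hp := pos_lt L _ (ltn_ord i).
rewrite (@eq_big_nat _ _ _ _ _ _ Tf); last first.
  by move=> k /andP[_ Hk]; rewrite nth_mkseq //; lia.
rewrite big_nat_recr //= prefix ?(ltnW Hp) //.
rewrite /Tf doubleK odd_double /= ds_pos // (negbTE Hd) -ds_pos //.
by rewrite mulnC divnK // Q_dvd.
Qed.

Definition fB : tuple_morphism :=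
  @TupleMorphism sh T alpha (fl_pos L) T_pos alpha_inj alpha_compat.

Lemma bwd : encodes fB L.
Proof.
split=> //.
apply: (@eq_from_nth _ 0).
  by rewrite /tm_strides size_map size_enum_ord -fl_size.
rewrite /tm_strides size_map size_enum_ord => i Hi.
have := nth_strides fB (Ordinal Hi); rewrite /= => ->.
case E: (alpha (Ordinal Hi)) => [j|].
  by rewrite (alpha_stride _ _ E).
by rewrite (alpha_none _ E).
Qed.

End Bwd.

Theorem mainTheorem8 (L : flat_layout) :
  (exists f : tuple_morphism, encodes f L) <-> tractable L.
Proof.
split.
- by case=> f Hf; exact: fwd Hf.
- by move=> Htr; exists (fB L Htr); exact: (bwd L Htr).
Qed.
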